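(* Let $\varphi$ be a closed block-labelled formula in disjunctive form, and let $f$ be a bijective renaming of propositional variables such that $f(X^k) = [\varphi[X^k]]^k$ for every $X^k \in \mathrm{bv}(\varphi)$. Then for every sub-formula $\psi$ of $\varphi$ and every set $E$ of states of $\mathrm{enc}(\varphi)$ such that $\{\varphi[Y^k] \mid Y^k \in \mathrm{fv}(\psi)\} \subseteq E$ and $E \cap \{\varphi[Y^k] \mid Y^k \in \mathrm{bv}(\psi)\} = \emptyset$, we have $\mathrm{dec}_s(\mathrm{enc}(\varphi), \psi, E) =_f \psi$.
   Context: An LTS is a tuple $(\Sigma, A, \to, s_0)$ with state set $\Sigma$, label set $A$, transition relation $\to\,\subseteq \Sigma\times A\times\Sigma$ (written $s \xrightarrow{a} s'$) and initial state $s_0$. Block-labelled formulas in disjunctive form are generated by $\varphi ::= \mathbf{ff} \mid \varphi_1 \lor \varphi_2 \mid \langle a\rangle\varphi_0 \mid \mu X^k.\varphi_0 \mid \neg\varphi_0 \mid X^k$, where $a$ ranges over action labels, $X$ over propositional variables and $k\in\mathbb{N}$ is a block number attached to every variable occurrence. $\mathrm{fv}(\varphi)$ and $\mathrm{bv}(\varphi)$ denote the free and bound variables; $\varphi$ is closed if $\mathrm{fv}(\varphi)=\emptyset$. All bound variables are assumed to have distinct names, and for $X^k\in\mathrm{bv}(\varphi)$, $\varphi[X^k]$ denotes the unique sub-formula of $\varphi$ of the form $\mu X^k.\varphi_0$. Encoding: $\mathrm{enc}(\varphi)$ is the LTS whose states are the sub-formulas of $\varphi$, with initial state $\varphi$,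 where $\mathbf{ff}$ has no outgoing transitions and the transitions are exactly: $X^k \xrightarrow{\lor} \varphi[X^k]$; $\neg\varphi_0 \xrightarrow{\neg} \varphi_0$; $\langle a\rangle\varphi_0 \xrightarrow{\langle a\rangle}\varphi_0$; $\varphi_1\lor\varphi_2 \xrightarrow{\lor}\varphi_1$ and $\varphi_1\lor\varphi_2\xrightarrow{\lor}\varphi_2$; $\mu X^k.\varphi_0 \xrightarrow{\mu^k}\varphi_0$. (Labels are the symbols $\lor$, $\neg$, $\langle a\rangle$, $\mu^k$.) Decoding: for an LTS $P$ with labels of the forms $\lor,\neg,\langle a\rangle,\mu^k$, a state $s$ and a set $E$ of states, $\mathrm{dec}_s(P,s,E) = \bigvee_{s\xrightarrow{\sigma}s' \in P}\mathrm{dec}_t(P, s\xrightarrow{\sigma}s', E)$ (a disjunction built with binary $\lor$ in some enumeration order of the outgoing transitions; the empty disjunction is $\mathbf{ff}$), where $\mathrm{dec}_t(P,s\xrightarrow{\lor}s',E)=\mathrm{dec}_s(P,s',E)$, $\mathrm{dec}_t(P,s\xrightarrow{\neg}s',E)=\neg\mathrm{dec}_s(P,s',E)$, $\mathrm{dec}_t(P,s\xrightarrow{\langle a\rangle}s',E)=\langle a\rangle\mathrm{dec}_s(P,s',E)$, and $\mathrm{dec}_t(P,s\xrightarrow{\mu^k}s',E)$ equals $[s]^k$ if $s\in E$ and $\mu [s]^k.\mathrm{dec}_s(P,s',E\cup\{s\})$ otherwise. Here $[s]^k$ denotes a propositional variable with block number $k$ uniquely determined by the pair $(s,k)$. Equality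 modulo renaming, commutativity and idempotence: for a bijection $f$ on propositional variables, $=_f$ is the smallest relation on formulas such that whenever $\varphi_i =_f \varphi_i'$ ($i\in\{0,1,2\}$): $\mathbf{ff}=_f\mathbf{ff}$, $\neg\varphi_0=_f\neg\varphi_0'$, $\langle a\rangle\varphi_0=_f\langle a\rangle\varphi_0'$, $\varphi_1\lor\varphi_2=_f\varphi_1'\lor\varphi_2'$, $X=_f f(X)$ and $\mu X.\varphi_0=_f\mu f(X).\varphi_0'$ for every variable $X$; $\varphi_1\lor\varphi_2 =_f \varphi_2'\lor\varphi_1'$; $\varphi_0\lor\varphi_0=_f\varphi_0'$ and $\varphi_0=_f\varphi_0'\lor\varphi_0'$. *)

(* Defs.v *)
From Stdlib Require Import List.
Import ListNotations.
Set Implicit Arguments.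

(* Block-labelled formulas in disjunctive form over action labels A and
   variable names V; a propositional variable X^k is the pair (X, k). *)
Inductive form (A V : Type) : Type :=
| FF : form A V
| Or : form A V -> form A V -> form A V
| Dia : A -> form A V -> form A V
| Mu : V -> nat -> form A V -> form A V
| Neg : form A V -> form A V
| Var : V -> nat -> form A V.
Arguments FF {A V}. Arguments Or {A V}. Arguments Dia {A V}. Arguments Mu {A V}. Arguments Neg {A V}. Arguments Var {A V}.

Section Formulas.
Variables A V : Type.
Notation form := (form A V).

Inductive sub : form -> form -> Prop :=
| sub_refl p : sub p p
| sub_or_l p q r : sub r p -> sub r (Or p q)
| sub_or_r p q r : sub r q -> sub r (Or p q)
| sub_dia a p r : sub r p -> sub r (Dia a p)
| sub_mu X k p r : sub r p -> sub r (Mu X k p)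
| sub_neg p r : sub r p -> sub r (Neg p).

Fixpoint free (x : V * nat) (p : form) : Prop :=
  match p with
  | FF => False
  | Or p q => free x p \/ free x q
  | Dia _ p => free x p
  | Mu X k p => x <> (X, k) /\ free x p
  | Neg p => free x p
  | Var X k => x = (X, k)
  end.

Fixpoint bvl (p : form) : list (V * nat) :=
  match p with
  | FF => []
  | Or p q => bvl p ++ bvl q
  | Dia _ p => bvl p
  | Mu X k p => (X, k) :: bvl p
  | Neg p => bvl p
  | Var _ _ => []
  end.

Definition closed (p : form) : Prop := forall x, ~ free x p.

Definition distinct_bv (p : form) : Prop := NoDup (bvl p).

Inductive label : Type :=
| LOr : label
| LNeg : label
| LDia : A -> label
| LMu : nat -> label.

(* Transitions of enc(phi); the states are the sub-formulas of phi. *)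
Inductive enc_trans (phi : form) : form -> label -> form -> Prop :=
| et_var X k p : sub (Var X k) phi -> sub (Mu X k p) phi ->
    enc_trans phi (Var X k) LOr (Mu X k p)
| et_neg p : sub (Neg p) phi -> enc_trans phi (Neg p) LNeg p
| et_dia a p : sub (Dia a p) phi -> enc_trans phi (Dia a p) (LDia a) p
| et_or_l p q : sub (Or p q) phi -> enc_trans phi (Or p q) LOr p
| et_or_r p q : sub (Or p q) phi -> enc_trans phi (Or p q) LOr q
| et_mu X k p : sub (Mu X k p) phi -> enc_trans phi (Mu X k p) (LMu k) p.

Inductive eqf (f : V * nat -> V * nat) : form -> form -> Prop :=
| eqf_ff : eqf f FF FF
| eqf_neg p p' : eqf f p p' -> eqf f (Neg p) (Neg p')
| eqf_dia a p p' : eqf f p p' -> eqf f (Dia a p) (Dia a p')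
| eqf_or p1 p2 p1' p2' : eqf f p1 p1' -> eqf f p2 p2' ->
    eqf f (Or p1 p2) (Or p1' p2')
| eqf_var X k : eqf f (Var X k) (Var (fst (f (X, k))) (snd (f (X, k))))
| eqf_mu X k p p' : eqf f p p' ->
    eqf f (Mu X k p) (Mu (fst (f (X, k))) (snd (f (X, k))) p')
| eqf_comm p1 p2 p1' p2' : eqf f p1 p1' -> eqf f p2 p2' ->
    eqf f (Or p1 p2) (Or p2' p1')
| eqf_idem_l p p' : eqf f p p' -> eqf f (Or p p) p'
| eqf_idem_r p p' : eqf f p p' -> eqf f p (Or p' p').

Fixpoint bigor (l : list form) : form :=
  match l with
  | [] => FF
  | [x] => x
  | x :: l => Or x (bigor l)
  end.

Definition bijective (f : V * nat -> V * nat) : Prop :=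
  exists g, (forall x, g (f x) = x) /\ (forall y, f (g y) = y).

End Formulas.
Arguments LOr {A}. Arguments LNeg {A}. Arguments LDia {A}. Arguments LMu {A}.

Record lts (S L : Type) : Type := mkLTS {
  lstates : S -> Prop;
  ltrans : S -> L -> S -> Prop;
  linit : S }.

Definition enc (A V : Type) (phi : form A V) : lts (form A V) (label A) :=
  mkLTS (fun s => sub s phi) (enc_trans phi) phi.

(* Decoding, as a relation: decS code P s E psi means that psi is the result
   of dec_s(P, s, E) for some enumeration order of the outgoing transitions.
   [s]^k is the variable (code s k, k). *)
Section Decode.
Variables (A V S : Type) (code : S -> nat -> V) (P : lts S (label A)).

Inductive decS : S -> (S -> Prop) -> form A V -> Prop :=
| dec_s s E (l : list (label A * S)) (ps : list (form A V)) :
    NoDup l ->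
    (forall sg s', In (sg, s') l <-> ltrans P s sg s') ->
    decL s E l ps ->
    decS s E (bigor ps)
with decL : S -> (S -> Prop) -> list (label A * S) -> list (form A V) -> Prop :=
| decL_nil s E : decL s E [] []
| decL_cons s E t l p ps : decT s t E p -> decL s E l ps -> decL s E (t :: l) (p :: ps)
with decT : S -> (label A * S) -> (S -> Prop) -> form A V -> Prop :=
| decT_or s s' E p : decS s' E p -> decT s (LOr, s') E p
| decT_neg s s' E p : decS s' E p -> decT s (LNeg, s') E (Neg p)
| decT_dia s s' E a p : decS s' E p -> decT s (LDia a, s') E (Dia a p)
| decT_mu_in s s' E k : E s -> decT s (LMu k, s') E (Var (code s k) k)
| decT_mu_out s s' E k p : ~ E s -> decS s' (fun x => E x \/ x = s) p ->
    decT s (LMu k, s') E (Mu (code s k) k p).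
End Decode.

(* Main.v *)
Require Import Defs.
From Stdlib Require Import List Classical.
Import ListNotations.

Section H.
Variables (A V : Type).

Lemma sub_trans (a b c : form A V) : sub a b -> sub b c -> sub a c.
Proof. intros H1 H2; induction H2; eauto using sub. Qed.

Lemma sub_bvl X k (p r : form A V) : sub (Mu X k p) r -> In (X,k) (bvl r).
Proof.
  intros H; remember (Mu X k p) as m; induction H; subst; simpl; auto;
  try (apply in_or_app; auto).
Qed.

Lemma sub_nodup (a b : form A V) : sub a b -> NoDup (bvl b) -> NoDup (bvl a).
Proof.
  intros H; induction H; simpl; intros Hn; auto.
  - apply IHsub; eapply NoDup_app_remove_r; eauto.
  - apply IHsub; eapply NoDup_app_remove_l; eauto.
  - apply IHsub; inversion Hn; auto.
Qed.

Lemma nodup_app_disj {T} (l1 l2 : list T) a : NoDup (l1 ++ l2) -> In a l1 -> In a l2 -> False.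
Proof.
  induction l1; simpl; intros Hn H1 H2; [auto|].
  inversion Hn; subst. destruct H1 as [->|H1]; eauto.
  apply H3; apply in_or_app; auto.
Qed.

Lemma binder_unique (phi : form A V) X k p q :
  NoDup (bvl phi) -> sub (Mu X k p) phi -> sub (Mu X k q) phi -> p = q.
Proof.
  induction phi; intros Hn H1 H2; simpl in Hn.
  - inversion H1.
  - inversion H1; subst; inversion H2; subst.
    + eapply IHphi1; eauto; eapply NoDup_app_remove_r; eauto.
    + exfalso. apply sub_bvl in H3. apply sub_bvl in H4.
      eapply nodup_app_disj; eauto.
    + exfalso. apply sub_bvl in H3. apply sub_bvl in H4.
      eapply nodup_app_disj; eauto.
    + eapply IHphi2; eauto; eapply NoDup_app_remove_l; eauto.
  - inversion H1; subst; inversion H2; subst; eauto.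
  - inversion Hn; subst.
    inversion H1; subst; inversion H2; subst; auto;
    try (exfalso; match goal with h : sub (Mu _ _ _) _ |- _ => apply sub_bvl in h; now auto end);
    eauto.
  - inversion H1; subst; inversion H2; subst; eauto.
  - inversion H1.
Qed.

Lemma free_binder (r phi : form A V) x :
  sub r phi -> free x r -> free x phi \/ exists p, sub (Mu (fst x) (snd x) p) phi.
Proof.
  intros H; induction H; intros Hf; simpl; auto.
  - destruct (IHsub Hf) as [h|[p0 h]]; auto. right; exists p0; eauto using sub.
  - destruct (IHsub Hf) as [h|[p0 h]]; auto. right; exists p0; eauto using sub.
  - destruct (IHsub Hf) as [h|[p0 h]]; auto. right; exists p0; eauto using sub.
  - destruct (IHsub Hf) as [h|[p0 h]].
    + destruct (classic (x = (X,k))) as [e|ne]; auto.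
      right; exists p; subst; constructor.
    + right; exists p0; eauto using sub.
  - destruct (IHsub Hf) as [h|[p0 h]]; auto. right; exists p0; eauto using sub.
Qed.

Lemma list1 {T} (l : list T) a : NoDup l -> (forall y, In y l <-> y = a) -> l = [a].
Proof.
  intros Hn H. destruct l as [|x l'].
  - exfalso; apply (proj2 (H a)); auto.
  - assert (x = a) by (apply H; left; auto). subst.
    destruct l' as [|z l'']; auto. exfalso.
    assert (z = a) by (apply H; right; left; auto). subst.
    inversion Hn; subst; apply H2; left; auto.
Qed.

Lemma list2 {T} (l : list T) a b : NoDup l -> (forall y, In y l <-> y = a \/ y = b) ->
  (a = b /\ l = [a]) \/ (a <> b /\ (l = [a;b] \/ l = [b;a])).
Proof.
  intros Hn H. destruct (classic (a = b)) as [e|ne].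
  - subst. left; split; auto. apply list1; auto. intro y; rewrite H; tauto.
  - right; split; auto. destruct l as [|x l'].
    + exfalso; apply (proj2 (H a)); auto.
    + inversion Hn; subst.
      assert (Hx : x = a \/ x = b) by (apply H; left; auto).
      destruct Hx; subst.
      * left. f_equal. apply list1; auto. intro y; split.
        -- intro Hy. assert (y = a \/ y = b) as [|] by (apply H; right; auto); subst; auto.
           contradiction.
        -- intro; subst. assert (In b (a :: l')) as [|] by (apply H; auto); auto.
           congruence.
      * right. f_equal. apply list1; auto. intro y; split.
        -- intro Hy. assert (y = a \/ y = b) as [|] by (apply H; right; auto); subst; auto.
           contradiction.
        -- intro; subst. assert (In a (b :: l')) as [|] by (apply H; auto); auto.
           congruence.
Qed.

Variable code : form A V -> nat -> V.
Variable phi : form A V.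

Lemma decL_one s E t ps : decL code (enc phi) s E [t] ps ->
  exists p, ps = [p] /\ decT code (enc phi) s t E p.
Proof.
  intro H; inversion H; subst.
  match goal with h : decL _ _ _ _ [] _ |- _ => inversion h; subst end. eauto.
Qed.

Lemma decL_two s E t1 t2 ps : decL code (enc phi) s E [t1; t2] ps ->
  exists p1 p2, ps = [p1; p2] /\ decT code (enc phi) s t1 E p1 /\ decT code (enc phi) s t2 E p2.
Proof.
  intro H; inversion H; subst.
  match goal with h : decL _ _ _ _ [_] _ |- _ => apply decL_one in h as (p2 & -> & h2) end.
  eauto.
Qed.

Lemma single_ex s t E c :
  (forall sg s', enc_trans phi s sg s' <-> (sg, s') = t) ->
  decT code (enc phi) s t E c -> decS code (enc phi) s E c.
Proof.
  intros Ht Hd. change c with (bigor [c]).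
  apply dec_s with (l := [t]).
  - constructor; [simpl; auto|constructor].
  - intros sg s'; simpl; rewrite Ht; split; [intros [|[]]; auto | auto].
  - constructor; auto; constructor.
Qed.

Lemma single_un s t E chi :
  (forall sg s', enc_trans phi s sg s' <-> (sg, s') = t) ->
  decS code (enc phi) s E chi -> exists c, decT code (enc phi) s t E c /\ chi = c.
Proof.
  intros Ht Hd. inversion Hd; subst.
  assert (l = [t]) by (apply list1; auto; intros [sg s']; rewrite H0; simpl; apply Ht).
  subst. apply decL_one in H1 as (p & -> & h). simpl. eauto.
Qed.

End H.

Lemma main (A V : Type) (code : form A V -> nat -> V)
  (phi : form A V) (f : V * nat -> V * nat) :
  closed phi ->
  NoDup (bvl phi) ->
  (forall X k p, sub (Mu X k p) phi -> f (X, k) = (code (Mu X k p) k, k)) ->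
  forall (psi : form A V) (E : form A V -> Prop),
    sub psi phi ->
    (forall Y k p, free (Y, k) psi -> sub (Mu Y k p) phi -> E (Mu Y k p)) ->
    (forall Y k p, In (Y, k) (bvl psi) -> sub (Mu Y k p) phi -> ~ E (Mu Y k p)) ->
    (exists chi, decS code (enc phi) psi E chi) /\
    (forall chi, decS code (enc phi) psi E chi -> eqf f psi chi).
Proof.
  intros Hcl Hnd Hf psi. induction psi; intros E Hs Hfr Hbv.
  -
    assert (Ht : forall sg s', ~ enc_trans phi FF sg s') by (intros sg s' h; inversion h).
    split.
    + exists (bigor (@nil (form A V))). apply dec_s with (l := []).
      * constructor.
      * intros sg s'; simpl; split; [intros []| intro h; apply Ht in h; auto].
      * constructor.
    + intros chi Hd. inversion Hd; subst.
      destruct l as [|[sg s'] l].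
      * inversion H1; subst; simpl; constructor.
      * exfalso. apply (Ht sg s'). apply H0. left; auto.
  -
    assert (Hs1 : sub psi1 phi) by (eapply sub_trans; [|exact Hs]; constructor; apply sub_refl).
    assert (Hs2 : sub psi2 phi) by (eapply sub_trans; [|exact Hs]; apply sub_or_r; apply sub_refl).
    destruct (IHpsi1 E Hs1) as [[c1 Hc1] U1].
    { intros; apply Hfr; simpl; auto. }
    { intros; apply Hbv; simpl; auto; apply in_or_app; auto. }
    destruct (IHpsi2 E Hs2) as [[c2 Hc2] U2].
    { intros; apply Hfr; simpl; auto. }
    { intros; apply Hbv; simpl; auto; apply in_or_app; auto. }
    assert (Ht : forall sg s', enc_trans phi (Or psi1 psi2) sg s' <->
                 (sg, s') = (LOr, psi1) \/ (sg, s') = (LOr, psi2)).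
    { intros sg s'; split.
      - intro h; inversion h; subst; auto.
      - intros [h|h]; inversion h; subst; constructor; auto. }
    split.
    + destruct (classic (psi1 = psi2)) as [e|ne].
      * subst. exists c1. apply single_ex with (t := (LOr, psi2)).
        -- intros sg s'; rewrite Ht; tauto.
        -- constructor; auto.
      * exists (bigor [c1; c2]). apply dec_s with (l := [(LOr, psi1); (LOr, psi2)]).
        -- constructor; [simpl; intros [h|[]]; congruence| constructor; [simpl; auto| constructor]].
        -- intros sg s'; simpl; rewrite Ht; split; [intros [|[|[]]]; auto| intros [|]; auto].
        -- repeat constructor; auto.
    + intros chi Hd. inversion Hd; subst.
      destruct (@list2 _ l (LOr, psi1) (LOr, psi2)) as [[e ->]|[ne [->| ->]]]; auto.
      { intros [sg s']. rewrite H0. simpl. apply Ht. }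
      * inversion e; subst. apply decL_one in H1 as (p & -> & h).
        inversion h; subst. simpl. apply eqf_idem_l; auto.
      * apply decL_two in H1 as (p1 & p2 & -> & h1 & h2).
        inversion h1; subst. inversion h2; subst. simpl. constructor; auto.
      * apply decL_two in H1 as (p1 & p2 & -> & h1 & h2).
        inversion h1; subst. inversion h2; subst. simpl. apply eqf_comm; auto.
  -
    assert (Hs1 : sub psi phi) by (eapply sub_trans; [|exact Hs]; constructor; apply sub_refl).
    destruct (IHpsi E Hs1) as [[c1 Hc1] U1]; auto.
    assert (Ht : forall sg s', enc_trans phi (Dia a psi) sg s' <-> (sg, s') = (LDia a, psi)).
    { intros sg s'; split; intro h; inversion h; subst; auto; constructor; auto. }
    split.
    + exists (Dia a c1). eapply single_ex; eauto. constructor; auto.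
    + intros chi Hd. eapply single_un in Hd; [|exact Ht]; destruct Hd as [c [Hc ->]].
      inversion Hc; subst. constructor; auto.
  -
    rename v into X, n into k.
    assert (Hs1 : sub psi phi) by (eapply sub_trans; [|exact Hs]; constructor; apply sub_refl).
    assert (HnE : ~ E (Mu X k psi)) by (apply Hbv; simpl; auto).
    assert (Hndp : NoDup (bvl (Mu X k psi))) by (eapply sub_nodup; eauto).
    simpl in Hndp. inversion Hndp as [|? ? Hnin Hndp']; subst.
    set (E' := fun x => E x \/ x = Mu X k psi).
    destruct (IHpsi E' Hs1) as [[c1 Hc1] U1].
    { intros Y j p h hs. destruct (classic ((Y, j) = (X, k))) as [e|ne].
      - inversion e; subst. right. f_equal. eapply (@binder_unique _ _ phi); eauto.
      - left. apply Hfr; auto. simpl; auto. }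
    { intros Y j p h hs [h1|h1].
      - eapply Hbv; eauto. simpl; auto.
      - inversion h1; subst. auto. }
    assert (Ht : forall sg s', enc_trans phi (Mu X k psi) sg s' <-> (sg, s') = (LMu k, psi)).
    { intros sg s'; split; intro h; inversion h; subst; auto; constructor; auto. }
    split.
    + eexists. eapply single_ex; eauto. apply decT_mu_out; eauto.
    + intros chi Hd. eapply single_un in Hd; [|exact Ht]; destruct Hd as [c [Hc ->]].
      inversion Hc; subst; [contradiction|].
      pose proof (@eqf_mu _ _ f X k _ _ (U1 _ H5)) as G.
      rewrite (Hf X k psi Hs) in G. exact G.
  -
    assert (Hs1 : sub psi phi) by (eapply sub_trans; [|exact Hs]; constructor; apply sub_refl).
    destruct (IHpsi E Hs1) as [[c1 Hc1] U1]; auto.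
    assert (Ht : forall sg s', enc_trans phi (Neg psi) sg s' <-> (sg, s') = (LNeg, psi)).
    { intros sg s'; split; intro h; inversion h; subst; auto; constructor; auto. }
    split.
    + exists (Neg c1). eapply single_ex; eauto. constructor; auto.
    + intros chi Hd. eapply single_un in Hd; [|exact Ht]; destruct Hd as [c [Hc ->]].
      inversion Hc; subst. constructor; auto.
  -
    rename v into X, n into k.
    destruct (@free_binder _ _ _ _ (X, k) Hs) as [h|[p0 Hp0]]; [simpl; auto| exfalso; eapply Hcl; eauto|].
    simpl in Hp0.
    assert (HE : E (Mu X k p0)) by (apply Hfr; simpl; auto).
    assert (Ht : forall sg s', enc_trans phi (Var X k) sg s' <-> (sg, s') = (LOr, Mu X k p0)).
    { intros sg s'; split; intro h.
      - inversion h; subst. f_equal. f_equal. eapply (@binder_unique _ _ phi); eauto.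
      - inversion h; subst; constructor; auto. }
    assert (Ht2 : forall sg s', enc_trans phi (Mu X k p0) sg s' <-> (sg, s') = (LMu k, p0)).
    { intros sg s'; split; intro h; inversion h; subst; auto; constructor; auto. }
    split.
    + eexists. eapply single_ex; eauto. constructor.
      eapply single_ex; eauto. apply decT_mu_in; auto.
    + intros chi Hd. eapply single_un in Hd; [|exact Ht]; destruct Hd as [c [Hc ->]].
      inversion Hc; subst. match goal with h : decS _ _ _ _ _ |- _ => eapply single_un in h; [|exact Ht2]; destruct h as [c' [Hc' ->]] end.
      inversion Hc'; subst; [|contradiction].
      pose proof (@eqf_var A V f X k) as G. rewrite (Hf X k p0 Hp0) in G. exact G.
Qed.

Theorem lemma1 (A V : Type) (code : form A V -> nat -> V)
  (phi : form A V) (f : V * nat -> V * nat) :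
  closed phi ->
  distinct_bv phi ->
  bijective f ->
  (forall X k p, sub (Mu X k p) phi -> f (X, k) = (code (Mu X k p) k, k)) ->
  forall (psi : form A V) (E : form A V -> Prop),
    sub psi phi ->
    (forall s, E s -> sub s phi) ->
    (forall Y k p, free (Y, k) psi -> sub (Mu Y k p) phi -> E (Mu Y k p)) ->
    (forall Y k p, In (Y, k) (bvl psi) -> sub (Mu Y k p) phi -> ~ E (Mu Y k p)) ->
    (exists chi, decS code (enc phi) psi E chi) /\
    (forall chi, decS code (enc phi) psi E chi -> eqf f psi chi).
Proof.
  intros Hcl Hd _ Hf psi E Hs _ H1 H2. eapply main; eauto.
Qed.
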